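(* Let $E$ be a set and let $\mathcal{F}$ be a set of finite nonempty subsets of $E$ satisfying the strong circuit elimination axiom: for every $C_0,C_1\in\mathcal{F}$, $e\in C_0\cap C_1$ and $f\in C_0\triangle C_1$ there is $C\in\mathcal{F}$ with $f\in C\subseteq(C_0\cup C_1)\setminus\{e\}$. Then the set $\mathcal{C}$ of $\subseteq$-minimal elements of $\mathcal{F}$ is the set of circuits of a finitary matroid $M$ on $E$, and each $F\in\mathcal{F}$ is a scrawl of $M$, i.e. a union of circuits of $M$.
   Context: A finitary matroid is a matroid on a possibly infinite ground set all of whose circuits are finite. $X\triangle Y=(X\setminus Y)\cup(Y\setminus X)$. *)

(* Defs.v *)
From mathcomp Require Import all_boot.
From mathcomp Require Import boolp classical_sets cardinality.
Set Implicit Arguments. Unset Strict Implicit. Unset Printing Implicit Defensive.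
Local Open Scope classical_set_scope.

Section Matroid.
Variable E : Type.

Definition maximal_in (P : set (set E)) (A : set E) : Prop :=
  P A /\ forall B, P B -> A `<=` B -> B = A.

Definition minimal_in (P : set (set E)) (A : set E) : Prop :=
  P A /\ forall B, P B -> B `<=` A -> B = A.

(* Independence axioms of (possibly infinite) matroids on the ground set E
   (Bruhn, Diestel, Kriesell, Pendavingh, Wollan): (I1), (I2), (I3), (IM). *)
Definition is_matroid (I : set (set E)) : Prop :=
  [/\ I set0,
      (forall A B, I B -> A `<=` B -> I A),
      (forall A B, I A -> ~ maximal_in I A -> maximal_in I B ->
         exists x, B x /\ ~ A x /\ I (A `|` [set x]))
    & (forall A X, I A -> A `<=` X ->
         exists M, maximal_in (fun B => I B /\ A `<=` B /\ B `<=` X) M)].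

Definition circuit (I : set (set E)) (C : set E) : Prop :=
  minimal_in (fun D => ~ I D) C.

Definition is_finitary_matroid (I : set (set E)) : Prop :=
  is_matroid I /\ forall C, circuit I C -> finite_set C.

Definition strong_circuit_elimination (F : set (set E)) : Prop :=
  forall C0 C1 e f, F C0 -> F C1 -> C0 e -> C1 e ->
    ((C0 `\` C1) `|` (C1 `\` C0)) f ->
    exists C, F C /\ C f /\ C `<=` (C0 `|` C1) `\ e.

End Matroid.

(* Main.v *)
Require Import Defs.
From mathcomp Require Import all_boot.
From mathcomp Require Import boolp classical_sets cardinality.
From Stdlib Require Import Classical Lia.
From mathcomp Require Import zify.
Local Open Scope classical_set_scope.
Set Implicit Arguments. Unset Strict Implicit.

Lemma exists_notin (T : Type) (A B : set T) : ~ A `<=` B -> exists y, A y /\ ~ B y.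
Proof.
move=> nAB; apply: NNPP => hn; apply: nAB => z Az; apply: NNPP => nBz.
by apply: hn; exists z.
Qed.

Lemma finite_wf (T : Type) (P : set T -> Prop) :
  (forall A, finite_set A -> (forall B, B `<` A -> P B) -> P A) ->
  forall A, finite_set A -> P A.
Proof.
move=> H A /(@finite_seqP {classic T}) [s ->].
suff: forall n (s : seq {classic T}) (A : set T), (size s <= n)%N -> A `<=` [set` s] -> P A.
  by move=> /(_ _ s _ (leqnn _)); apply.
elim=> [|n IH] {}s {}A sz As; apply: H.
- exact: sub_finite_set As (finite_seq s).
- move=> B [BA /exists_notin [y [Ay nBy]]].
  have := As _ Ay; rewrite /=; case: s sz {As} => //.
- exact: sub_finite_set As (finite_seq s).
- move=> B [BA /exists_notin [y [Ay nBy]]].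
  apply: (IH [seq x <- s | x != (y : {classic T})] B).
    have ys : y \in s by exact: As.
    rewrite size_filter.
    have h1 := count_predC (pred1 (y : {classic T})) s.
    have h2 : (0 < count (pred1 (y : {classic T})) s)%N by rewrite -has_count has_pred1.
    have e : count (predC (pred1 (y : {classic T}))) s = count (fun x => x != (y : {classic T})) s.
      by apply: eq_count.
    rewrite -e.
    rewrite -ltnS; apply: leq_trans sz; rewrite -h1 -add1n leq_add2r; exact: h2.
  move=> z Bz /=; rewrite mem_filter; apply/andP; split.
    by apply/eqP => zy; apply: nBy; rewrite -zy.
  exact: As (BA _ Bz).
Qed.

Lemma finite_min (T : Type) (Q : set (set T)) (A : set T) :
  finite_set A -> Q A -> exists B, B `<=` A /\ minimal_in Q B.
Proof.
move=> fA; move: A fA; apply: finite_wf => A fA IH QA.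
case: (pselect (minimal_in Q A)) => [mA|nmA]; first by exists A; split=> [z|].
have [B [QB [BA BnA]]] : exists B, Q B /\ B `<=` A /\ B <> A.
  apply: NNPP => hn; apply: nmA; split=> // B QB BA; apply: NNPP => BnA.
  by apply: hn; exists B.
have pBA : B `<` A.
  split=> // AB; apply: BnA; apply/seteqP; split=> //.
have [C [CB mC]] := IH B pBA QB.
exists C; split=> //; exact: subset_trans CB BA.
Qed.

Definition indep {E : Type} (F : set (set E)) (D : set E) :=
  forall Y, F Y -> ~ Y `<=` D.

Lemma indep_sub {E : Type} (F : set (set E)) (A B : set E) :
  indep F B -> A `<=` B -> indep F A.
Proof. by move=> iB AB Y FY YA; apply: (iB Y FY); exact: subset_trans YA AB. Qed.

Lemma dep_ex {E : Type} (F : set (set E)) (D : set E) :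
  ~ indep F D -> exists Y, F Y /\ Y `<=` D.
Proof.
move=> nD; apply: NNPP => hn; apply: nD => Y FY YD; apply: hn; by exists Y.
Qed.

Lemma chain_fin {E : Type} (A : set E) (Fm : set (set E)) (Y : set E) :
  total_on Fm subset -> finite_set Y ->
  Y `<=` A `|` \bigcup_(G in Fm) G ->
  exists G, (G = set0 \/ Fm G) /\ Y `<=` A `|` G.
Proof.
move=> tot fY; move: Y fY; apply: finite_wf => Y fY IH YU.
case: (pselect (exists y, Y y)) => [[y Yy]|hn]; last first.
  exists set0; split; first by left.
  by move=> z Yz; exfalso; apply: hn; exists z.
have pY : Y `\ y `<` Y.
  split; first by move=> z [].
  by move=> /(_ y Yy) [_]; apply.
have [G1 [HG1 YG1]] := IH _ pY (fun z Hz => YU z (proj1 Hz)).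
have sub1 : forall G, A `|` G1 `<=` A `|` G -> (A `|` G) y -> Y `<=` A `|` G.
  move=> G hG hy z Yz; case: (pselect (z = y)) => [->//|zy].
  by apply: hG; apply: YG1; split.
case: (YU y Yy) => [Ay|[G2 FG2 G2y]].
  by exists G1; split=> //; apply: sub1 => //; left.
case: HG1 => [G10|FG1].
  exists G2; split; first by right.
  by apply: sub1; [move=> z; rewrite G10 => -[Az|[]]; left|right].
case: (tot _ _ FG1 FG2) => [G12|G21].
  exists G2; split; first by right.
  by apply: sub1; [move=> z [Az|G1z]; [left|right; apply: G12]|right].
exists G1; split; first by right.
by apply: sub1; [|right; apply: G21].
Qed.

Section Main.
Variables (E : Type) (F : set (set E)).
Hypothesis Ffin : forall X, F X -> finite_set X /\ X !=set0.
Hypothesis SCE : strong_circuit_elimination F.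

Lemma min_through X x : F X -> X x ->
  exists C, minimal_in F C /\ C x /\ C `<=` X.
Proof.
move=> FX Xx.
have [Y [YX [[FY [Yx _]] minY]]] :=
  @finite_min _ _ X (proj1 (Ffin FX))
    (conj FX (conj Xx (@subset_refl _ X)) : (fun Y => F Y /\ Y x /\ Y `<=` X) X).
exists Y; split; last by split.
split=> // Z FZ ZY.
case: (pselect (Z x)) => Zx.
  by apply: minY => //; (repeat split) => //; exact: subset_trans ZY YX.
have [e Ze] := proj2 (Ffin FZ).
have [C [FC [Cx CYZ]]] := SCE FY FZ (ZY _ Ze) Ze (or_introl (conj Yx Zx)).
have CYs : C `<=` Y by move=> z /CYZ [[Yz|Zz] _] //; apply: ZY.
have CY : C = Y by apply: minY => //; (repeat split) => //; exact: subset_trans CYs YX.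
have : C e by rewrite CY; exact: (ZY _ Ze).
by move=> /CYZ [_ H]; exfalso; apply: H.
Qed.

Lemma circuitE C : circuit (indep F) C <-> minimal_in F C.
Proof.
split.
  move=> [nIC minC]; have [Y [FY YC]] := dep_ex nIC.
  have YeC : Y = C by apply: minC => // h; exact: (h Y FY).
  move: YeC FY => -> FC.
  split=> // B FB BC; apply: minC => // h; exact: (h B FB).
move=> [FC minC]; split; first by move=> h; exact: (h C FC).
move=> B nIB BC; have [Y [FY YB]] := dep_ex nIB.
have YeC : Y = C by apply: minC => //; exact: subset_trans YB BC.
by apply/seteqP; split=> //; rewrite -YeC.
Qed.

Lemma indep0 : indep F set0.
Proof. by move=> Y /Ffin [_ [y Yy]] /(_ y Yy). Qed.

Lemma indepIM A X : indep F A -> A `<=` X ->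
  exists M, maximal_in (fun B => indep F B /\ A `<=` B /\ B `<=` X) M.
Proof.
move=> iA AX.
have [|M [[iAM MX] maxM]] := @Zorn_bigcup E (fun B => indep F (A `|` B) /\ B `<=` X).
  move=> Fm FmP tot; split; last first.
    by move=> z [G FmG Gz]; apply: (proj2 (FmP _ FmG)).
  move=> Y FY YU.
  have [G [[G0|FmG] YG]] := chain_fin tot (proj1 (Ffin FY)) YU.
    apply: (iA Y FY) => z /YG; rewrite G0 => -[//|[]].
  exact: (proj1 (FmP _ FmG) Y FY YG).
exists (A `|` M); split.
  split=> //; split; first by move=> z Az; left.
  by move=> z [/AX|/MX].
move=> B [iB [AB BX]] AMB; apply: NNPP => nBAM.
have nB : ~ B `<=` A `|` M.
  by move=> BAM; apply: nBAM; apply/seteqP; split.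
apply: (maxM B).
  split; first by move=> z Mz; apply: AMB; right.
  by move=> BM; apply: nB => z /BM; right.
split=> //; apply: (indep_sub iB) => z [/AB|]//.
Qed.

Lemma indepI3 A B : indep F A -> ~ maximal_in (indep F) A -> maximal_in (indep F) B ->
  exists x, B x /\ ~ A x /\ indep F (A `|` [set x]).
Proof.
move=> iA nmA [iB mB].
have [y [nAy iAy]] : exists y, ~ A y /\ indep F (A `|` [set y]).
  apply: NNPP => hn; apply: nmA; split=> // B' iB' AB'.
  apply/seteqP; split=> // z B'z; apply: NNPP => nAz; apply: hn; exists z; split=> //.
  by apply: (indep_sub iB') => w [/AB'|->].
case: (pselect (B y)) => By; first by exists y.
apply: NNPP => hn.
have Hx : forall x, B x -> ~ A x -> exists Y, F Y /\ Y `<=` A `|` [set x].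
  move=> x Bx nAx; apply: dep_ex => iAx; apply: hn; by exists x.
have [D [FD DBy]] : exists D, F D /\ D `<=` B `|` [set y].
  apply: dep_ex => iBy; apply: By.
  have : B `|` [set y] = B by apply: mB => // z Bz; left.
  by move=> <-; right.
have Dy : D y.
  apply: NNPP => nDy; apply: (iB D FD) => z Dz.
  by case: (DBy z Dz) => // zy; rewrite zy in Dz.
have fS : finite_set (D `\` (A `|` [set y])) by apply: finite_setD; exact: proj1 (Ffin FD).
suff: forall S, finite_set S -> forall D, F D -> D y -> D `<=` A `|` B `|` [set y] ->
      D `\` (A `|` [set y]) `<=` S -> False.
  move=> /(_ _ fS D FD Dy); apply=> //.
  by move=> z /DBy [Bz|zy]; [left; right|right].
apply: finite_wf => S _ IH {FD Dy DBy fS}D FD Dy DAB DS.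
case: (pselect (D `<=` A `|` [set y])) => DAy; first exact: (iAy D FD DAy).
have [x [Dx nx]] := exists_notin DAy.
have nAx : ~ A x by move=> Ax; apply: nx; left.
have xy : x <> y by move=> xy; apply: nx; right.
have Bx : B x by case: (DAB x Dx) => [[//|//]|//].
have [Y [FY YAx]] := Hx x Bx nAx.
have Yx : Y x.
  apply: NNPP => nYx; apply: (iA Y FY) => z Yz.
  by case: (YAx z Yz) => // zx; rewrite zx in Yz.
have nYy : ~ Y y by move=> /YAx [//|yx]; apply: xy.
have [C [FC [Cy CDY]]] := SCE FD FY Dx Yx (or_introl (conj Dy nYy)).
apply: (IH (S `\ x)).
- split; first by move=> z [].
  by move=> /(_ x (DS x (conj Dx nx))) [_]; apply.
- exact: FC.
- exact: Cy.
- move=> z /CDY [[/DAB//|/YAx [Az|zx]] _]; first by left; left.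
  by left; right; rewrite zx.
- move=> z [Cz nz]; have [[Dz|Yz] zx] := CDY z Cz.
    by split=> //; apply: DS.
  by case: (YAx z Yz) => // ?; exfalso; apply: nz; left.
Qed.

End Main.

Unset Implicit Arguments.

Theorem lemma2p5 (E : Type) (F : set (set E)) :
  (forall X, F X -> finite_set X /\ X !=set0) ->
  strong_circuit_elimination F ->
  exists I : set (set E),
    [/\ is_finitary_matroid I,
        (forall C, circuit I C <-> minimal_in F C)
      & (forall X, F X -> exists S : set (set E),
            S `<=` circuit I /\ X = \bigcup_(C in S) C)].
Proof.
move=> Ffin SCE; exists (indep F); split.
- split.
    split.
    + exact: indep0.
    + by move=> A B iB AB; exact: indep_sub iB AB.
    + by move=> A B; exact: indepI3.
    + by move=> A X; exact: indepIM.
  by move=> C /(circuitE F C) [/Ffin []].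
- exact: circuitE.
move=> X FX; exists (fun C => minimal_in F C /\ C `<=` X); split.
  by move=> C [mC _]; apply/(circuitE F C).
apply/seteqP; split.
  move=> x Xx; have [C [mC [Cx CX]]] := min_through Ffin SCE FX Xx.
  by exists C.
by move=> x [C [_ CX] Cx]; apply: CX.
Qed.
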